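(* For all $t,s\in\Lambda^\infty$: if $t\to^\infty_\beta s$ and $t$ has a head normal form, then $s$ has a head normal form.
   Context: Fix an infinite set $V$ of variables and a set $C$ of constants with $V\cap C=\emptyset$, containing a distinguished constant $\bot$. $\Lambda^\infty$ is the set of infinitary lambda-terms: all finite and infinite terms generated coinductively by $t ::= c\mid x\mid t\,t\mid\lambda x.t$, identified up to $\alpha$-equivalence; $s[t/x]$ is capture-avoiding substitution; an atom is a variable or constant. $\to_\beta$ is the compatible closure of $\{((\lambda x.s)t,s[t/x])\}$, i.e. the least relation containing these pairs and closed under $s\to s'\Rightarrow st\to s't,\ ts\to ts',\ \lambda x.s\to\lambda x.s'$; $\to^*_\beta$ is its reflexive-transitive closure. A term is in head normal form (hnf) if it is $\lambda x_1\ldots x_m.\,a\,t_1\ldots t_n$ ($m,n\ge0$, $a$ an atom, $a\not\equiv\bot$); $t$ has a hnf if $t\to^*_\beta t'$ for some $t'$ in hnf. The infinitary closure $\to^\infty_\beta$ is the greatest relation such that whenever $s\to^\infty_\beta t$: $t\equiv a$ is an atom and $s\to^*_\beta a$; or $t\equiv t_1't_2'$, $s\to^*_\beta t_1t_2$ and $t_i\to^\infty_\beta t_i'$; or $t\equiv\lambda x.r'$, $s\to^*_\beta\lambda x.r$ and $r\to^\infty_\beta r'$. *)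

(* Defs.v *)
(* Infinitary lambda-terms with de Bruijn indices (alpha-equivalence
   built in), constants drawn from an arbitrary type C with a distinguished bot. *)
From Stdlib Require Import Arith.
Set Implicit Arguments.

Section Terms.
Variable C : Type.

CoInductive term : Type :=
| Var : nat -> term
| Const : C -> term
| App : term -> term -> term
| Lam : term -> term.

CoFixpoint shift (c d : nat) (t : term) : term :=
  match t with
  | Var n => Var (if n <? c then n else n + d)
  | Const a => Const a
  | App t1 t2 => App (shift c d t1) (shift c d t2)
  | Lam r => Lam (shift (S c) d r)
  end.

(* subst k u t : replace index k by u (lifted under k binders),
   decrementing the free indices above k; s[t/x] for s = body, k = 0 *)
CoFixpoint subst (k : nat) (u : term) (t : term) : term :=
  match t with
  | Var n => if n =? k then shift 0 k u
             else if n <? k then Var n else Var (pred n)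
  | Const a => Const a
  | App t1 t2 => App (subst k u t1) (subst k u t2)
  | Lam r => Lam (subst (S k) u r)
  end.

Inductive beta : term -> term -> Prop :=
| beta_root : forall s t, beta (App (Lam s) t) (subst 0 t s)
| beta_appl : forall s s' t, beta s s' -> beta (App s t) (App s' t)
| beta_appr : forall s s' t, beta s s' -> beta (App t s) (App t s')
| beta_lam : forall s s', beta s s' -> beta (Lam s) (Lam s').

Inductive beta_star : term -> term -> Prop :=
| star_refl : forall t, beta_star t t
| star_step : forall t u v, beta t u -> beta_star u v -> beta_star t v.

Inductive head_app (bot : C) : term -> Prop :=
| ha_var : forall n, head_app bot (Var n)
| ha_const : forall c, c <> bot -> head_app bot (Const c)
| ha_app : forall a b, head_app bot a -> head_app bot (App a b).

Inductive hnf (bot : C) : term -> Prop :=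
| hnf_base : forall t, head_app bot t -> hnf bot t
| hnf_lam : forall t, hnf bot t -> hnf bot (Lam t).

Definition has_hnf (bot : C) (t : term) : Prop :=
  exists t', beta_star t t' /\ hnf bot t'.

(* infinitary closure: greatest relation, hence coinductive *)
CoInductive beta_inf : term -> term -> Prop :=
| inf_var : forall s n, beta_star s (Var n) -> beta_inf s (Var n)
| inf_const : forall s c, beta_star s (Const c) -> beta_inf s (Const c)
| inf_app : forall s t1 t2 t1' t2',
    beta_star s (App t1 t2) -> beta_inf t1 t1' -> beta_inf t2 t2' ->
    beta_inf s (App t1' t2')
| inf_lam : forall s r r',
    beta_star s (Lam r) -> beta_inf r r' -> beta_inf s (Lam r').

End Terms.

(* Main.v *)
Require Import Defs.
From Stdlib Require Import Arith Lia List.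

Local Arguments Var {C}.
Local Arguments Const {C}.
Local Arguments App {C}.
Local Arguments Lam {C}.
Section S.
Context {C : Type}.
Local Notation term := (term C).
Local Notation Vr := (@Var C).

Definition frob (t : term) : term :=
  match t with
  | Var n => Var n | Const a => Const a | App a b => App a b | Lam r => Lam r end.
Lemma frob_eq t : t = frob t. Proof. destruct t; reflexivity. Qed.

Lemma shift_var c d n : shift c d (Vr n) = Vr (if n <? c then n else n + d).
Proof. rewrite (frob_eq (shift _ _ _)). reflexivity. Qed.
Lemma shift_const c d (a : C) : shift c d (Const a) = Const a.
Proof. rewrite (frob_eq (shift _ _ _)). reflexivity. Qed.
Lemma shift_app c d (a b : term) : shift c d (App a b) = App (shift c d a) (shift c d b).
Proof. rewrite (frob_eq (shift _ _ _)). reflexivity. Qed.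
Lemma shift_lam c d (r : term) : shift c d (Lam r) = Lam (shift (S c) d r).
Proof. rewrite (frob_eq (shift _ _ _)). reflexivity. Qed.
Lemma subst_var k (u : term) n : subst k u (Vr n) =
  if n =? k then shift 0 k u else if n <? k then Vr n else Vr (pred n).
Proof. rewrite (frob_eq (subst _ _ _)). simpl. destruct (n =? k); [symmetry; apply frob_eq|destruct (n <? k)]; reflexivity. Qed.
Lemma subst_const k u (a : C) : subst k u (Const a) = Const a.
Proof. rewrite (frob_eq (subst _ _ _)). reflexivity. Qed.
Lemma subst_app k (u a b : term) : subst k u (App a b) = App (subst k u a) (subst k u b).
Proof. rewrite (frob_eq (subst _ _ _)). reflexivity. Qed.
Lemma subst_lam k (u r : term) : subst k u (Lam r) = Lam (subst (S k) u r).
Proof. rewrite (frob_eq (subst _ _ _)). reflexivity. Qed.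

CoInductive bisim : term -> term -> Prop :=
| b_var n : bisim (Vr n) (Vr n)
| b_const (a : C) : bisim (Const a) (Const a)
| b_app a a' b b' : bisim a a' -> bisim b b' -> bisim (App a b) (App a' b')
| b_lam r r' : bisim r r' -> bisim (Lam r) (Lam r').

Lemma bisim_refl : forall t, bisim t t.
Proof. cofix CH. intros [n|a|a b|r]; constructor; apply CH. Qed.
Lemma bisim_sym : forall t u, bisim t u -> bisim u t.
Proof. cofix CH. intros t u H; destruct H; constructor; apply CH; assumption. Qed.
Lemma bisim_trans : forall t u v, bisim t u -> bisim u v -> bisim t v.
Proof. cofix CH. intros t u v H1 H2; destruct H1; inversion H2; subst; constructor; eapply CH; eassumption. Qed.

Arguments bisim_trans {t u v}.
Arguments bisim_sym {t u}.
Lemma bisim_eq n m : n = m -> bisim (Vr n) (Vr m).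
Proof. intros ->; constructor. Qed.

Lemma shift_bisim : forall c d t t', bisim t t' -> bisim (shift c d t) (shift c d t').
Proof. cofix CH. intros c d t t' H; destruct H.
 - rewrite !shift_var; constructor.
 - rewrite !shift_const; constructor.
 - rewrite !shift_app; constructor; apply CH; assumption.
 - rewrite !shift_lam; constructor; apply CH; assumption.
Qed.

Lemma shift_shift_comm j c d : forall b t,
  bisim (shift (b+j+c) d (shift b j t)) (shift b j (shift (b+c) d t)).
Proof. cofix CH. intros b [n|a|x y|r].
 - rewrite !shift_var. apply bisim_eq.
   destruct (Nat.ltb_spec n b); destruct (Nat.ltb_spec n (b+c)); simpl;
   repeat match goal with |- context [?x <? ?y] => destruct (Nat.ltb_spec x y) end; lia.
 - rewrite !shift_const; constructor.
 - rewrite !shift_app; constructor; apply CH.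
 - rewrite !shift_lam; constructor. apply (CH (S b)).
Qed.

Ltac simplc := repeat (first [rewrite shift_const|rewrite subst_const|rewrite shift_app|rewrite subst_app|rewrite shift_lam|rewrite subst_lam]).
Ltac crush := repeat (rewrite ?shift_var, ?subst_var; match goal with
   | |- context [?x <? ?y] => destruct (Nat.ltb_spec x y)
   | |- context [?x =? ?y] => destruct (Nat.eqb_spec x y) end);
   try (apply bisim_eq; lia); try lia.

Lemma shift_merge m i j (H : m <= i) : forall a q,
  bisim (shift (a + m) j (shift a i q)) (shift a (i + j) q).
Proof. cofix CH. intros a [n|x|x y|r].
 - crush.
 - simplc; constructor.
 - simplc; constructor; apply CH.
 - simplc; constructor. apply (CH (S a)).
Qed.

Lemma subst_shift_cancel j k (u : term) : forall a q,
  bisim (subst (a + j) u (shift a (S (j+k)) q)) (shift a (j+k) q).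
Proof. cofix CH. intros a [n|x|x y|r].
 - crush.
 - simplc; constructor.
 - simplc; constructor; apply CH.
 - simplc; constructor. apply (CH (S a)).
Qed.

Lemma subst_shift_comm j k (q : term) : forall b f,
  bisim (subst (b + j + k) q (shift b j f)) (shift b j (subst (b+k) q f)).
Proof. cofix CH. intros b [n|x|x y|r].
 - crush. subst n.
   apply bisim_sym. replace (b + j + k) with (b + k + j) by lia.
   apply (shift_merge b (b+k) j ltac:(lia) 0 q).
 - simplc; constructor.
 - simplc; constructor; apply CH.
 - simplc; constructor. apply (CH (S b)).
Qed.

Lemma subst_bisim : forall k u u' t t', bisim u u' -> bisim t t' ->
  bisim (subst k u t) (subst k u' t').
Proof. cofix CH. intros k u u' t t' Hu H; destruct H.
 - rewrite !subst_var. destruct (n =? k); [apply shift_bisim; auto|destruct (n <? k); constructor].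
 - simplc; constructor.
 - simplc; constructor; apply CH; assumption.
 - simplc; constructor; apply CH; assumption.
Qed.

Lemma shift_subst_comm c d (f : term) : forall j e,
  bisim (shift (j+c) d (subst j f e)) (subst j (shift c d f) (shift (S(j+c)) d e)).
Proof. cofix CH. intros j [n|x|x y|r].
 - crush. subst n. apply (shift_shift_comm j c d 0 f).
 - simplc; constructor.
 - simplc; constructor; apply CH.
 - simplc; constructor. apply (CH (S j)).
Qed.

Lemma subst_subst_comm k (q : term) : forall j f e,
  bisim (subst (j+k) q (subst j f e)) (subst j (subst k q f) (subst (S(j+k)) q e)).
Proof. cofix CH. intros j f [n|x|x y|r].
 - crush.
   + subst n. apply (subst_shift_comm j k q 0 f).
   + subst n. apply bisim_sym. apply (subst_shift_cancel j k (subst k q f) 0 q).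
 - simplc; constructor.
 - simplc; constructor; apply CH.
 - simplc; constructor. apply (CH (S j)).
Qed.

Inductive whs : term -> term -> Prop :=
| whs_root p q : whs (App (Lam p) q) (subst 0 q p)
| whs_app a a' b : whs a a' -> whs (App a b) (App a' b).

Inductive whstar : term -> term -> Prop :=
| whstar_refl t : whstar t t
| whstar_step t u v : whs t u -> whstar u v -> whstar t v.

Lemma whstar_trans t u v : whstar t u -> whstar u v -> whstar t v.
Proof. induction 1; intros; auto. econstructor; eauto. Qed.

Lemma whstar_app a a' b : whstar a a' -> whstar (App a b) (App a' b).
Proof. induction 1. constructor. econstructor. apply whs_app; eauto. auto. Qed.

Lemma whs_beta t u : whs t u -> beta t u.
Proof. induction 1; constructor; auto. Qed.

Lemma whstar_beta t u : whstar t u -> beta_star t u.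
Proof. induction 1; econstructor; eauto using whs_beta. Qed.

Lemma whs_bisim {Z Z'} : whs Z Z' -> forall X, bisim X Z -> exists X', whs X X' /\ bisim X' Z'.
Proof. induction 1; intros X HX.
 - inversion HX as [| |a1 a2 b1 b2 Ha Hb|]; subst. inversion Ha as [| | |r1 r2 Hr]; subst.
   eexists; split. constructor. apply subst_bisim; auto.
 - inversion HX as [| |a1 a2 b1 b2 Ha Hb|]; subst. destruct (IHwhs _ Ha) as [X' [H1 H3]].
   exists (App X' b1). split. constructor; auto. constructor; auto.
Qed.

Lemma whstar_bisim {Z W} : whstar Z W -> forall X, bisim X Z -> exists X', whstar X X' /\ bisim X' W.
Proof. induction 1; intros X HX.
 - exists X; split; [constructor|auto].
 - destruct (whs_bisim H _ HX) as [X1 [H1 H2]]. destruct (IHwhstar _ H2) as [X2 [H3 H4]].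
   exists X2; split; auto. econstructor; eauto.
Qed.

Lemma whs_subst {x y} : whs x y -> forall k q, exists y', whs (subst k q x) y' /\ bisim y' (subst k q y).
Proof. induction 1; intros k u.
 - rewrite subst_app, subst_lam. eexists; split. constructor.
   apply bisim_sym. apply (subst_subst_comm k u 0 q p).
 - destruct (IHwhs k u) as [y' [H1 H2]]. rewrite !subst_app.
   eexists; split. constructor; eauto. constructor; auto. apply bisim_refl.
Qed.

Lemma whstar_subst {x w} : whstar x w -> forall k q, exists X, whstar (subst k q x) X /\ bisim X (subst k q w).
Proof. induction 1; intros k q.
 - eexists; split. constructor. apply bisim_refl.
 - destruct (whs_subst H k q) as [y' [H1 H2]]. destruct (IHwhstar k q) as [X [H3 H4]].
   destruct (whstar_bisim H3 _ H2) as [X' [H5 H6]]. exists X'. split. econstructor; eauto.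
   eapply bisim_trans; eauto.
Qed.

Lemma whs_shift {x y} : whs x y -> forall c d, exists y', whs (shift c d x) y' /\ bisim y' (shift c d y).
Proof. induction 1; intros c d.
 - rewrite shift_app, shift_lam. eexists; split. constructor.
   apply bisim_sym. apply (shift_subst_comm c d q 0 p).
 - destruct (IHwhs c d) as [y' [H1 H2]]. rewrite !shift_app.
   eexists; split. constructor; eauto. constructor; auto. apply bisim_refl.
Qed.

Lemma whstar_shift {x w} : whstar x w -> forall c d, exists X, whstar (shift c d x) X /\ bisim X (shift c d w).
Proof. induction 1; intros c d.
 - eexists; split. constructor. apply bisim_refl.
 - destruct (whs_shift H c d) as [y' [H1 H2]]. destruct (IHwhstar c d) as [X [H3 H4]].
   destruct (whstar_bisim H3 _ H2) as [X' [H5 H6]]. exists X'. split. econstructor; eauto.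
   eapply bisim_trans; eauto.
Qed.

CoInductive std : term -> term -> Prop :=
| std_var t n : whstar t (Vr n) -> std t (Vr n)
| std_const t (c : C) : whstar t (Const c) -> std t (Const c)
| std_app t a b a' b' : whstar t (App a b) -> std a a' -> std b b' -> std t (App a' b')
| std_lam t r r' : whstar t (Lam r) -> std r r' -> std t (Lam r').

Lemma std_prefix X X1 Y : whstar X X1 -> std X1 Y -> std X Y.
Proof. intros H1 H2. destruct H2.
 - constructor; eapply whstar_trans; eauto.
 - constructor; eapply whstar_trans; eauto.
 - econstructor; [eapply whstar_trans; eauto| |]; eauto.
 - econstructor; [eapply whstar_trans; eauto|]; eauto.
Qed.

Lemma std_bisim : forall X X0 Y0 Y, bisim X X0 -> std X0 Y0 -> bisim Y0 Y -> std X Y.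
Proof. cofix CH. intros X X0 Y0 Y H1 H2 H3. destruct H2.
 - destruct (whstar_bisim H _ H1) as [X' [H4 H5]]. inversion H5; subst. inversion H3; subst.
   constructor; auto.
 - destruct (whstar_bisim H _ H1) as [X' [H4 H5]]. inversion H5; subst. inversion H3; subst.
   constructor; auto.
 - destruct (whstar_bisim H _ H1) as [X' [H4 H5]]. inversion H5; subst. inversion H3; subst.
   econstructor. eauto. eapply CH; eauto. eapply CH; eauto.
 - destruct (whstar_bisim H _ H1) as [X' [H4 H5]]. inversion H5; subst. inversion H3; subst.
   econstructor. eauto. eapply CH; eauto.
Qed.

Lemma std_shift_gen : forall X Y c d q q', std q q' -> bisim X (shift c d q) ->
  bisim Y (shift c d q') -> std X Y.
Proof. cofix CH. intros X Y c d q q' Hs HX HY. destruct Hs as [q n W|q a W|q a b a' b' W Ha Hb|q r r' W Hr].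
 - destruct (whstar_shift W c d) as [X1 [H1 H2]]. destruct (whstar_bisim H1 _ HX) as [X2 [H3 H4]].
   pose proof (bisim_trans H4 H2) as H5. rewrite shift_var in H5, HY.
   inversion H5; subst. inversion HY; subst. constructor; auto.
 - destruct (whstar_shift W c d) as [X1 [H1 H2]]. destruct (whstar_bisim H1 _ HX) as [X2 [H3 H4]].
   pose proof (bisim_trans H4 H2) as H5. rewrite shift_const in H5, HY.
   inversion H5; subst. inversion HY; subst. constructor; auto.
 - destruct (whstar_shift W c d) as [X1 [H1 H2]]. destruct (whstar_bisim H1 _ HX) as [X2 [H3 H4]].
   pose proof (bisim_trans H4 H2) as H5. rewrite shift_app in H5, HY.
   inversion H5; subst. inversion HY; subst. econstructor. eauto.
   eapply (CH _ _ c d a a' Ha); eauto. eapply (CH _ _ c d b b' Hb); eauto.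
 - destruct (whstar_shift W c d) as [X1 [H1 H2]]. destruct (whstar_bisim H1 _ HX) as [X2 [H3 H4]].
   pose proof (bisim_trans H4 H2) as H5. rewrite shift_lam in H5, HY.
   inversion H5; subst. inversion HY; subst. econstructor. eauto.
   eapply (CH _ _ (S c) d r r' Hr); eauto.
Qed.

Lemma std_shift c d q q' : std q q' -> std (shift c d q) (shift c d q').
Proof. intros H. eapply std_shift_gen; eauto using bisim_refl. Qed.

Lemma std_subst_gen : forall X Y k p p' q q', std p p' -> std q q' -> bisim X (subst k q p) ->
  bisim Y (subst k q' p') -> std X Y.
Proof. cofix CH. intros X Y k p p' q q' Hs Hq HX HY. destruct Hs as [p n W|p a W|p a b a' b' W Ha Hb|p r r' W Hr].
 - destruct (whstar_subst W k q) as [X1 [H1 H2]]. destruct (whstar_bisim H1 _ HX) as [X2 [H3 H4]].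
   pose proof (bisim_trans H4 H2) as H5. rewrite subst_var in H5, HY.
   destruct (n =? k).
   + eapply std_prefix. eauto. eapply std_bisim. eauto. apply (std_shift 0 k _ _ Hq). apply bisim_sym; auto.
   + destruct (n <? k); inversion H5; subst; inversion HY; subst; constructor; auto.
 - destruct (whstar_subst W k q) as [X1 [H1 H2]]. destruct (whstar_bisim H1 _ HX) as [X2 [H3 H4]].
   pose proof (bisim_trans H4 H2) as H5. rewrite subst_const in H5, HY.
   inversion H5; subst. inversion HY; subst. constructor; auto.
 - destruct (whstar_subst W k q) as [X1 [H1 H2]]. destruct (whstar_bisim H1 _ HX) as [X2 [H3 H4]].
   pose proof (bisim_trans H4 H2) as H5. rewrite subst_app in H5, HY.
   inversion H5; subst. inversion HY; subst. econstructor. eauto.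
   eapply (CH _ _ k a a' q q' Ha Hq); eauto. eapply (CH _ _ k b b' q q' Hb Hq); eauto.
 - destruct (whstar_subst W k q) as [X1 [H1 H2]]. destruct (whstar_bisim H1 _ HX) as [X2 [H3 H4]].
   pose proof (bisim_trans H4 H2) as H5. rewrite subst_lam in H5, HY.
   inversion H5; subst. inversion HY; subst. econstructor. eauto.
   eapply (CH _ _ (S k) r r' q q' Hr Hq); eauto.
Qed.

Lemma std_subst k p p' q q' : std p p' -> std q q' -> std (subst k q p) (subst k q' p').
Proof. intros H H0. apply (std_subst_gen _ _ k p p' q q' H H0); apply bisim_refl. Qed.

Lemma std_refl : forall t, std t t.
Proof. cofix CH. intros [n|a|a b|r]; econstructor; try constructor; apply CH. Qed.

Lemma std_beta {u u'} : beta u u' -> forall t, std t u -> std t u'.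
Proof. induction 1; intros t0 H0.
 - inversion H0 as [| |t1 a b a' b' W Ha Hb|]; subst.
   inversion Ha as [| | |a1 r r' W2 Hr]; subst.
   apply std_prefix with (X1 := subst 0 b r).
   + eapply whstar_trans; [exact W|]. eapply whstar_trans; [apply whstar_app; exact W2|].
     econstructor; [constructor|constructor].
   + apply std_subst; auto.
 - inversion H0 as [| |t1 a b a' b' W Ha Hb|]; subst. econstructor; eauto.
 - inversion H0 as [| |t1 a b a' b' W Ha Hb|]; subst. econstructor; eauto.
 - inversion H0 as [| | |t1 r r' W Hr]; subst. econstructor; eauto.
Qed.

Lemma std_star {u w} : beta_star u w -> forall t, std t u -> std t w.
Proof. induction 1; intros; eauto using std_beta. Qed.

Lemma std_binf : forall x y z, std x y -> beta_inf y z -> std x z.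
Proof. cofix CH. intros x y z H1 H2. destruct H2 as [y n Hs|y c Hs|y t1 t2 t1' t2' Hs H3 H4|y r r' Hs H3].
 - eapply std_star; [eassumption|exact H1].
 - eapply std_star; [eassumption|exact H1].
 - pose proof (std_star Hs _ H1) as H5. inversion H5 as [| |t a b a' b' W Ha Hb|]; subst.
   econstructor. eauto. eapply CH; eauto. eapply CH; eauto.
 - pose proof (std_star Hs _ H1) as H5. inversion H5 as [| | |t a a' W Ha]; subst.
   econstructor. eauto. eapply CH; eauto.
Qed.

Inductive HNs (bot : C) : term -> Prop :=
| HN_atom t G : whstar t G -> head_app bot G -> HNs bot t
| HN_lam t r : whstar t (Lam r) -> HNs bot r -> HNs bot t.

Lemma std_head_app {bot h} : head_app bot h -> forall t, std t h -> exists G, whstar t G /\ head_app bot G.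
Proof. induction 1; intros t Ht.
 - inversion Ht; subst. eexists; split; eauto. constructor.
 - inversion Ht; subst. eexists; split; eauto. constructor; auto.
 - inversion Ht as [| |t1 x y a' b' W Ha Hb|]; subst.
   destruct (IHhead_app _ Ha) as [G [H1 H2]]. exists (App G y). split.
   eapply whstar_trans; eauto. apply whstar_app; auto. constructor; auto.
Qed.

Lemma std_hnf {bot h} : hnf bot h -> forall t, std t h -> HNs bot t.
Proof. induction 1; intros t' Ht.
 - destruct (std_head_app H _ Ht) as [G [H1 H2]]. econstructor; eauto.
 - inversion Ht as [| | |t1 r r' W Hr]; subst. eapply HN_lam; eauto.
Qed.

Inductive whn : nat -> term -> term -> Prop :=
| whn0 t : whn 0 t t
| whnS n t u v : whs t u -> whn n u v -> whn (S n) t v.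

Lemma whstar_whn {t u} : whstar t u -> exists n, whn n t u.
Proof. induction 1. exists 0; constructor. destruct IHwhstar as [n Hn]. exists (S n); econstructor; eauto. Qed.

Lemma whs_det {x y1} : whs x y1 -> forall y2, whs x y2 -> y1 = y2.
Proof. induction 1; intros y2 H2; inversion H2; subst; auto.
 - inversion H3.
 - inversion H.
 - f_equal. auto.
Qed.

Lemma whn_det {k x G} : whn k x G -> (forall z, ~ whs G z) -> forall j y, whn j x y -> j <= k /\ whn (k - j) y G.
Proof. induction 1; intros HG j y Hj.
 - destruct j. inversion Hj; subst. split; [lia|constructor]. inversion Hj; subst. exfalso; eapply HG; eauto.
 - destruct j. inversion Hj; subst. split; [lia|]. simpl. econstructor; eauto.
   inversion Hj as [|j' t1 u1 v1 Hs1 Hn1]; subst. pose proof (whs_det H _ Hs1); subst. destruct (IHwhn HG _ _ Hn1). split; [lia|auto].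
Qed.

Fixpoint apps (a : term) (bs : list term) : term :=
  match bs with nil => a | cons b bs => apps (App a b) bs end.

Lemma whs_apps bs : forall a a', whs a a' -> whs (apps a bs) (apps a' bs).
Proof. induction bs; intros; simpl; auto. apply IHbs. constructor; auto. Qed.
Lemma beta_apps bs : forall a a', beta a a' -> beta (apps a bs) (apps a' bs).
Proof. induction bs; intros; simpl; auto. apply IHbs. constructor; auto. Qed.
Lemma whn_apps bs {j a W} : whn j a W -> whn j (apps a bs) (apps W bs).
Proof. induction 1; econstructor; eauto using whs_apps. Qed.

Inductive hda : term -> Prop :=
| hda_var n : hda (Vr n)
| hda_const (c : C) : hda (Const c)
| hda_app a b : hda a -> hda (App a b).
Lemma hda_apps bs : forall a, hda a -> hda (apps a bs).
Proof. induction bs; intros; simpl; auto. apply IHbs; constructor; auto. Qed.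
Lemma hda_nowhs a : hda a -> forall z, ~ whs a z.
Proof. induction 1; intros z Hz; inversion Hz; subst.
 - inversion H.
 - eapply IHhda; eauto.
Qed.
Lemma head_app_hda bot a : head_app bot a -> hda a.
Proof. induction 1; constructor; auto. Qed.
Lemma head_app_apps bot bs : forall a, head_app bot a -> head_app bot (apps a bs).
Proof. induction bs; intros; simpl; auto. apply IHbs; constructor; auto. Qed.
Lemma head_app_apps_inv bot bs : forall a, head_app bot (apps a bs) -> head_app bot a.
Proof. induction bs as [|b bs IHbs]; intros a H; simpl in *; auto. apply IHbs in H. inversion H; auto. Qed.

Inductive fls : term -> Prop :=
| fls_var n : fls (Vr n)
| fls_const (c : C) : fls (Const c)
| fls_lam r : fls (Lam r)
| fls_app a b : fls a -> fls (App a b).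
Lemma whs_fls x y : whs x y -> fls x.
Proof. induction 1; repeat constructor; auto. Qed.
Lemma head_app_fls bot a : head_app bot a -> fls a.
Proof. induction 1; constructor; auto. Qed.
Lemma fls_apps_inv bs : forall a, fls (apps a bs) -> fls a.
Proof. induction bs as [|b bs IHbs]; intros a H; simpl in *; auto. apply IHbs in H. inversion H; auto. Qed.

Inductive stdtop : term -> term -> Prop :=
| st_var n : stdtop (Vr n) (Vr n)
| st_const (c : C) : stdtop (Const c) (Const c)
| st_app a b a' b' : std a a' -> std b b' -> stdtop (App a b) (App a' b')
| st_lam r r' : std r r' -> stdtop (Lam r) (Lam r').

Lemma stdtop_std {a s} : stdtop a s -> std a s.
Proof. destruct 1; econstructor; eauto; constructor. Qed.
Lemma std_top {a s} : std a s -> exists W, whstar a W /\ stdtop W s.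
Proof. destruct 1; eexists; split; eauto; constructor; auto. Qed.

Lemma star_lam (r r' : term) : beta_star r r' -> beta_star (Lam r) (Lam r').
Proof. induction 1. constructor. econstructor. constructor; eauto. auto. Qed.

Lemma has_hnf_lam bot (s : term) : has_hnf bot s -> has_hnf bot (Lam s).
Proof. intros [h [H1 H2]]. exists (Lam h). split. apply star_lam; auto. apply hnf_lam; auto. Qed.

Lemma has_hnf_back bot (x y : term) : beta x y -> has_hnf bot y -> has_hnf bot x.
Proof. intros H [h [H1 H2]]. exists h; split; auto. econstructor; eauto. Qed.

Lemma claim bot G (HG : head_app bot G \/ exists r, G = Lam r /\ forall s', std r s' -> has_hnf bot s') :
  forall k a bs s1 bs', whn k (apps a bs) G -> std a s1 -> Forall2 std bs bs' -> has_hnf bot (apps s1 bs').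
Proof.
  assert (HN : forall z, ~ whs G z).
  { destruct HG as [H|[r [-> _]]]. apply hda_nowhs. eapply head_app_hda; eauto. intros z Hz; inversion Hz. }
  intros k. induction k as [k IHk] using (well_founded_induction lt_wf).
  intros a bs s1 bs' Hk Hs Hbs.
  assert (Hf : fls a).
  { destruct k. inversion Hk; subst. apply (fls_apps_inv bs).
    destruct HG as [H|[r [-> _]]]. eapply head_app_fls; eauto. constructor.
    inversion Hk; subst. apply (fls_apps_inv bs). eapply whs_fls; eauto. }
  revert bs s1 bs' Hk Hs Hbs. induction Hf; intros bs s1 bs' Hk Hs Hbs;
  destruct (std_top Hs) as [W [HW Ht]]; destruct (whstar_whn HW) as [j Hj];
  (destruct j as [|j];
   [ inversion Hj; subst
   | destruct (whn_det Hk HN _ _ (whn_apps bs Hj)) as [Hle Hr];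
     apply (IHk (k - S j) ltac:(lia) W bs s1 bs' Hr (stdtop_std Ht) Hbs) ]).
  - inversion Ht; subst. exists (apps (Vr n) bs'). split. constructor.
    constructor. apply head_app_apps. constructor.
  - inversion Ht; subst.
    assert (k = 0 /\ apps (Const c) bs = G) as [-> <-].
    { destruct k. inversion Hk; auto. inversion Hk; subst. exfalso.
      eapply hda_nowhs; eauto. apply hda_apps. constructor. }
    destruct HG as [H|[r [Hr _]]].
    + apply head_app_apps_inv in H. inversion H; subst.
      exists (apps (Const c) bs'). split. constructor. constructor. apply head_app_apps. constructor; auto.
    + exfalso. destruct bs; simpl in Hr. discriminate. clear -Hr.
      assert (hda (apps (App (Const c) t) bs)) by (apply hda_apps; repeat constructor).
      rewrite Hr in H. inversion H.
  - inversion Ht as [| | |r1 r' Hrr]; subst. destruct bs as [|b bs0].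
    + inversion Hbs; subst. simpl in *. destruct k.
      * inversion Hk; subst. destruct HG as [H|[r0 [Hr0 Hall]]]. inversion H.
        injection Hr0 as <-. apply has_hnf_lam. apply Hall; auto.
      * inversion Hk; subst. inversion H0.
    + inversion Hbs as [|b1 b' bs1 bs0' Hb Hbs0]; subst. simpl in *.
      destruct k. inversion Hk; subst. exfalso. eapply HN. apply whs_apps. constructor.
      inversion Hk; subst. pose proof (whs_det H0 _ (whs_apps bs0 _ _ (whs_root r b))); subst.
      eapply has_hnf_back. apply beta_apps. constructor.
      apply (IHk k ltac:(lia) (subst 0 b r) bs0 (subst 0 b' r') bs0' H1).
      apply std_subst; auto. auto.
  - inversion Ht as [| |a1 b1 a' b' Ha Hb|]; subst.
    apply (IHHf (b :: bs) a' (b' :: bs')); auto.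
Qed.

Lemma HNs_std {bot t} : HNs bot t -> forall s, std t s -> has_hnf bot s.
Proof. induction 1; intros s Hs; destruct (whstar_whn H) as [k Hk].
 - apply (claim bot G (or_introl H0) k t nil s nil); auto.
 - apply (claim bot (Lam r) (or_intror (ex_intro _ r (conj eq_refl IHHNs))) k t nil s nil); auto.
Qed.
End S.

Theorem lemma5p20 (C : Type) (bot : C) (t s : term C) :
  beta_inf t s -> has_hnf bot t -> has_hnf bot s.
Proof.
  intros Hinf [h [Hh1 Hh2]].
  assert (Hth : std t h) by (eapply std_star; [exact Hh1|apply std_refl]).
  pose proof (std_hnf Hh2 _ Hth) as HN.
  apply (HNs_std HN). eapply std_binf; [apply std_refl|exact Hinf].
Qed.
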